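(* Let $V$ be a finite set with positive element weights ($\vert A \vert$ = total weight of $A \subseteq V$), and let $\mathcal{P}, \mathcal{P}'$ be partitions of $V$ into nonempty parts. If an optimal $C_{\mathcal{P}}$-correspondence $(\mathcal{S}, \mathcal{S}')$ is not mutual, then $\vert \mathcal{S} \vert \in \{1, \vert \mathcal{P} \vert - 1\}$ or $\vert \mathcal{S}' \vert \in \{1, \vert \mathcal{P}' \vert - 1\}$.
   Context: For $\mathcal{S}$ a set of subsets of $V$, $U_{\mathcal{S}}$ is their union. A correspondence is a pair $(\mathcal{S}, \mathcal{S}')$ with $\mathcal{S} \subseteq \mathcal{P}$, $\mathcal{S}' \subseteq \mathcal{P}'$, with cost $\vert U_{\mathcal{S}} \triangle U_{\mathcal{S}'} \vert$. A $C_{\mathcal{P}}$-correspondence is one with $\mathcal{S} \notin \{\emptyset, \mathcal{P}\}$; it is optimal if its cost is minimum among all $C_{\mathcal{P}}$-correspondences. A correspondence is mutual if (1) $\vert P \cap U_{\mathcal{S}'} \vert \ge \vert P \vert/2$ for all $P \in \mathcal{S}$, (2) $\vert P \cap U_{\mathcal{S}'} \vert \le \vert P \vert/2$ for all $P \in \mathcal{P} \setminus \mathcal{S}$, (3) $\vert P' \cap U_{\mathcal{S}} \vert \ge \vert P' \vert/2$ for all $P' \in \mathcal{S}'$, and (4) $\vert P' \cap U_{\mathcal{S}} \vert \le \vert P' \vert/2$ for all $P' \in \mathcal{P}' \setminus \mathcal{S}'$. *)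

(* Defs.v *)
From mathcomp Require Import all_boot all_order all_algebra.
Set Implicit Arguments. Unset Strict Implicit. Unset Printing Implicit Defensive.
Import Order.TTheory GRing.Theory Num.Theory.
Local Open Scope ring_scope.

Section Defs.
Variables (R : realFieldType) (V : finType) (w : V -> R).

Definition weight (A : {set V}) : R := \sum_(x in A) w x.

Definition corr_cost (S S' : {set {set V}}) : R :=
  weight ((cover S :\: cover S') :|: (cover S' :\: cover S)).

Definition is_corr (P P' S S' : {set {set V}}) : Prop :=
  S \subset P /\ S' \subset P'.

Definition is_CP_corr (P P' S S' : {set {set V}}) : Prop :=
  is_corr P P' S S' /\ S <> set0 /\ S <> P.

Definition optimal_CP_corr (P P' S S' : {set {set V}}) : Prop :=
  is_CP_corr P P' S S' /\
  forall T T' : {set {set V}}, is_CP_corr P P' T T' ->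
    corr_cost S S' <= corr_cost T T'.

Definition mutual (P P' S S' : {set {set V}}) : Prop :=
  [/\ (forall X, X \in S -> weight X / 2 <= weight (X :&: cover S')),
      (forall X, X \in P :\: S -> weight (X :&: cover S') <= weight X / 2),
      (forall X, X \in S' -> weight X / 2 <= weight (X :&: cover S)) &
      (forall X, X \in P' :\: S' -> weight (X :&: cover S) <= weight X / 2)].
End Defs.

(* Main.v *)
Require Import Defs.
From mathcomp Require Import all_boot all_order all_algebra.
From mathcomp Require Import lra zify.
Import Order.TTheory GRing.Theory Num.Theory.
Local Open Scope ring_scope.
Set Implicit Arguments. Unset Strict Implicit.

Section Aux.
Variables (R : realFieldType) (V : finType) (w : V -> R).

Definition symd (A B : {set V}) : R := weight w ((A :\: B) :|: (B :\: A)).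

Lemma symdC A B : symd A B = symd B A.
Proof. by rewrite /symd setUC. Qed.

Lemma weight_split (Y X : {set V}) :
  weight w Y = weight w (Y :&: X) + weight w (Y :\: X).
Proof. by rewrite /weight (big_setID X). Qed.

Lemma symd_add (A B X : {set V}) :
  (forall v, v \in X -> v \notin A) ->
  symd (A :|: X) B + weight w (X :&: B) = symd A B + weight w (X :\: B).
Proof.
move=> dis; rewrite /symd (weight_split _ X) [in RHS](weight_split _ X).
have E1 : ((A :|: X) :\: B :|: B :\: (A :|: X)) :&: X = X :\: B.
  apply/setP => v; rewrite !inE; case: (boolP (v \in X)) => hx;
    rewrite ?andbF ?andbT //; first by have := dis v hx; case: (v \in A); case: (v \in B).
have E2 : ((A :\: B) :|: (B :\: A)) :&: X = X :&: B.
  apply/setP => v; rewrite !inE; case: (boolP (v \in X)) => hx;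
    rewrite ?andbF ?andbT //; first by have := dis v hx; case: (v \in A); case: (v \in B).
have E3 : ((A :|: X) :\: B :|: B :\: (A :|: X)) :\: X = ((A :\: B) :|: (B :\: A)) :\: X.
  apply/setP => v; rewrite !inE; case: (boolP (v \in X)) => hx //=;
    by rewrite ?orbF.
rewrite E1 E2 E3; lra.
Qed.

Lemma cover_add (X : {set V}) (S : {set {set V}}) : cover (X |: S) = cover S :|: X.
Proof.
apply/setP => v; rewrite in_setU; apply/bigcupP/idP.
  move=> [Y]; rewrite in_setU1 => /orP [/eqP -> -> | hY hv]; first by rewrite orbT.
  by apply/orP; left; apply/bigcupP; exists Y.
move=> /orP [/bigcupP [Y hY hv] | hv].
  by exists Y => //; rewrite in_setU1 hY orbT.
by exists X => //; rewrite in_setU1 eqxx.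
Qed.

Lemma cover_dis (P S : {set {set V}}) (X : {set V}) :
  trivIset P -> X \in P -> S \subset P -> X \notin S ->
  forall v, v \in X -> v \notin cover S.
Proof.
move=> tP XP SP XS v vX; apply/negP => /bigcupP [Y YS vY].
have YP : Y \in P by apply: (subsetP SP).
have neq : X != Y by apply/eqP => E; move: XS; rewrite E YS.
have := (trivIsetP tP) X Y XP YP neq.
by move/disjoint_setI0/setP/(_ v); rewrite !inE vX vY.
Qed.

End Aux.

Theorem proposition11 (R : realFieldType) (V : finType) (w : V -> R)
  (P P' S S' : {set {set V}}) :
  (forall v, 0 < w v) ->
  partition P [set: V] -> partition P' [set: V] ->
  optimal_CP_corr w P P' S S' ->
  ~ mutual w P P' S S' ->
  (#|S| = 1%N \/ #|S| = (#|P| - 1)%N) \/ (#|S'| = 1%N \/ #|S'| = (#|P'| - 1)%N).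
Proof.
move=> _ /and3P [_ tP _] /and3P [_ tP' _] [[[SP SP'] [S0 SPne]] opt] nmut.
have [h1|h1] := eqVneq #|S| 1%N; first by left; left.
have [h2|h2] := eqVneq #|S| (#|P| - 1)%N; first by left; right.
exfalso; apply: nmut.
have cc : forall T T', corr_cost w T T' = symd w (cover T) (cover T') by [].
have Sgt0 : (0 < #|S|)%N.
  by rewrite card_gt0; apply/eqP.
have SltP : (#|S| < #|P|)%N.
  by apply: proper_card; rewrite properEneq SP andbT; apply/eqP.
have Srem : forall X, X \in S -> cover S = cover (S :\ X) :|: X.
  by move=> X XS; rewrite -cover_add setD1K.
have SremD : forall X, X \in S -> forall v, v \in X -> v \notin cover (S :\ X).
  move=> X XS; apply: (cover_dis tP (subsetP SP _ XS)).
    by apply: subset_trans SP; apply: subD1set.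
  by rewrite !inE eqxx.
have S'rem : forall X, X \in S' -> cover S' = cover (S' :\ X) :|: X.
  by move=> X XS; rewrite -cover_add setD1K.
have S'remD : forall X, X \in S' -> forall v, v \in X -> v \notin cover (S' :\ X).
  move=> X XS; apply: (cover_dis tP' (subsetP SP' _ XS)).
    by apply: subset_trans SP'; apply: subD1set.
  by rewrite !inE eqxx.
split.
- move=> X XS; rewrite leNgt; apply/negP => hlt.
  have XP : X \in P by apply: (subsetP SP).
  have := opt (S :\ X) S'; rewrite !cc (Srem X XS).
  have := symd_add w (cover S') (SremD X XS).
  have := weight_split w X (cover S').
  have H : is_CP_corr P P' (S :\ X) S'.
    split; first by split => //; apply: subset_trans SP; apply: subD1set.
    split.
      move=> E; have := cardsD1 X S; rewrite XS E cards0 /=; by move=> HH; move: h1; rewrite HH.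
    by move=> E; move: XP; rewrite -E !inE eqxx.
  move=> /= h3 h4 /(_ H); lra.
- move=> X; rewrite inE => /andP [XnS XP]; rewrite leNgt; apply/negP => hgt.
  have := opt (X |: S) S'; rewrite !cc cover_add.
  have := symd_add w (cover S') (cover_dis tP XP SP XnS).
  have := weight_split w X (cover S').
  have H : is_CP_corr P P' (X |: S) S'.
    split; first by split => //; rewrite subUset sub1set XP SP.
    split.
      by move=> E; have := in_set0 X; rewrite -E setU11.
    move=> E; have := cardsU1 X S; rewrite E XnS /= => HH; move: h2 SltP; rewrite HH add1n subn1 /= ltnSn; lia.
  move=> /= h3 h4 /(_ H); lra.
- move=> X XS; rewrite leNgt; apply/negP => hlt.
  have XP : X \in P' by apply: (subsetP SP').
  have := opt S (S' :\ X); rewrite !cc (S'rem X XS) ![symd _ (cover S) _]symdC.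
  have := symd_add w (cover S) (S'remD X XS).
  have := weight_split w X (cover S).
  have H : is_CP_corr P P' S (S' :\ X).
    split; first by split => //; apply: subset_trans SP'; apply: subD1set.
    by [].

  move=> /= h3 h4 /(_ H); lra.
- move=> X; rewrite inE => /andP [XnS XP]; rewrite leNgt; apply/negP => hgt.
  have := opt S (X |: S'); rewrite !cc cover_add ![symd _ (cover S) _]symdC.
  have := symd_add w (cover S) (cover_dis tP' XP SP' XnS).
  have := weight_split w X (cover S).
  have H : is_CP_corr P P' S (X |: S').
    split; first by split => //; rewrite subUset sub1set XP SP'.
    by [].

  move=> /= h3 h4 /(_ H); lra.
Qed.
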